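(* Let $C\in U(2)$ be a quantum coin. If $C$ is non-trivial, then there exist exactly two unit vectors $\gamma_1,\gamma_2\in\mathbb{C}^2$, counted up to multiplication by a global phase $e^{i\eta}$, such that the coin setups $(C,\gamma_1)$ and $(C,\gamma_2)$ are symmetric in distribution. If $C$ is trivial, then there exist uncountably many unit vectors $\gamma\in\mathbb{C}^2$, pairwise not equal up to a global phase, such that $(C,\gamma)$ is symmetric in distribution.
   Context: Let $\mathcal{H}=\ell^2(\mathbb{Z})\otimes\mathbb{C}^2$, with position basis $\{|j\rangle: j\in\mathbb{Z}\}$ of $\ell^2(\mathbb{Z})$ and orthonormal basis $\{|\uparrow\rangle,|\downarrow\rangle\}$ of $\mathbb{C}^2$. A (quantum) coin is any $C\in U(2)$, written $C=a|\uparrow\rangle\langle\uparrow|+b|\uparrow\rangle\langle\downarrow|+c|\downarrow\rangle\langle\uparrow|+d|\downarrow\rangle\langle\downarrow|$; $C$ is called trivial iff $abcd=0$, non-trivial otherwise. The conditional translation is $T=\sum_{j\in\mathbb{Z}}|j+1\rangle\langle j|\otimes|\uparrow\rangle\langle\uparrow|+\sum_{j\in\mathbb{Z}}|j-1\rangle\langle j|\otimes|\downarrow\rangle\langle\downarrow|$ and the walk operator is $W(C)=T(\mathbb{1}\otimes C)$. A coin setup is a pair $(C,\gamma)$ with $C\in U(2)$ and $\gamma\in\mathbb{C}^2$ a unit vector (the initial coin state). Its induced distributions are $p_{(C,\gamma)}(j,n)=\langle\psi_n|(|j\rangle\langle j|\otimes\mathbb{1})|\psi_n\rangle$ with $\psi_n=W(C)^n(|0\rangle\otimes\gamma)$,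 for $j\in\mathbb{Z}$, $n\in\mathbb{N}$. A coin setup is called symmetric in distribution if $p_{(C,\gamma)}(j,n)=p_{(C,\gamma)}(-j,n)$ for all $j\in\mathbb{Z}$ and all $n\in\mathbb{N}$. *)

(* Defs.v *)
From HB Require Import structures.
From mathcomp Require Import all_boot all_order all_algebra.
From mathcomp Require Import complex.
From mathcomp Require Import boolp classical_sets cardinality reals trigo.
Set Implicit Arguments. Unset Strict Implicit. Unset Printing Implicit Defensive.
Import Order.TTheory GRing.Theory Num.Theory.
Local Open Scope ring_scope.
Local Open Scope complex_scope.

Section QW.
Variable R : realType.

Definition up : 'I_2 := ord0.
Definition down : 'I_2 := ord_max.

Definition qw_adj (m n : nat) (A : 'M[R[i]]_(m, n)) : 'M[R[i]]_(n, m) :=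
  \matrix_(i, j) (A j i)^*.

Definition qw_unitary (C : 'M[R[i]]_2) : Prop := C *m qw_adj C = 1%:M.

Definition is_unit_vector (g : 'cV[R[i]]_2) : Prop :=
  `|g up 0| ^+ 2 + `|g down 0| ^+ 2 = 1.

(* C = a|u><u| + b|u><d| + c|d><u| + d|d><d| ; trivial iff abcd = 0 *)
Definition trivial_coin (C : 'M[R[i]]_2) : Prop :=
  C up up * C up down * C down up * C down down = 0.

(* states in l^2(Z) (x) C^2 reached by the walk are finitely supported;
   represented as functions Z -> C^2 *)
Definition walk_step (C : 'M[R[i]]_2) (psi : int -> 'cV[R[i]]_2) : int -> 'cV[R[i]]_2 :=
  fun j => \col_k (if k == up then (C *m psi (j - 1)) up 0
                   else (C *m psi (j + 1)) down 0).

Definition init_state (g : 'cV[R[i]]_2) : int -> 'cV[R[i]]_2 :=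
  fun j => if j == 0 then g else 0.

Definition psi_n (C : 'M[R[i]]_2) (g : 'cV[R[i]]_2) (n : nat) : int -> 'cV[R[i]]_2 :=
  iter n (walk_step C) (init_state g).

Definition prob (C : 'M[R[i]]_2) (g : 'cV[R[i]]_2) (j : int) (n : nat) : R[i] :=
  `|psi_n C g n j up 0| ^+ 2 + `|psi_n C g n j down 0| ^+ 2.

Definition symmetric_in_distribution (C : 'M[R[i]]_2) (g : 'cV[R[i]]_2) : Prop :=
  forall (j : int) (n : nat), prob C g j n = prob C g (- j) n.

Definition phase (eta : R) : R[i] := (cos eta)%:C + 'i * (sin eta)%:C.

Definition phase_equiv (g1 g2 : 'cV[R[i]]_2) : Prop :=
  exists eta : R, g2 = phase eta *: g1.

End QW.

(* Main.v *)
Require Import Defs.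
From HB Require Import structures.
From mathcomp Require Import all_boot all_order all_algebra.
From mathcomp Require Import complex.
From mathcomp Require Import boolp classical_sets cardinality reals trigo.
From mathcomp Require Import ring.
From mathcomp Require Import ereal measure lebesgue_measure.
Import Order.TTheory GRing.Theory Num.Theory.
Local Open Scope ring_scope.
Local Open Scope complex_scope.

Set Implicit Arguments. Unset Strict Implicit.
Local Notation dn := Defs.down.
Local Notation cj := (@conjc _).
Lemma sum2 (V : nmodType) (F : 'I_2 -> V) : \sum_(i < 2) F i = F up + F dn.
Proof.
rewrite big_ord_recr big_ord_recr big_ord0 /= add0r.
by congr (F _ + F _); apply/val_inj.
Qed.

Lemma unc01 (R : realType) : ~ countable [set r : R | 0 <= r <= 1]%classic.
Proof.
move=> /countable_lebesgue_measure0.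
have -> : [set r : R | 0 <= r <= 1]%classic = [set` `[0, 1]%R]%classic.
  by apply/seteqP; split => r /=; rewrite in_itv.
rewrite lebesgue_measure_itv /= lte_fin ltr01 => /eqP.
by rewrite -EFinD subr0 eqe oner_eq0.
Qed.

Ltac fld := field; repeat (apply/andP; split); try (by []); try assumption.

Section W.
Variable R : realType.
Implicit Types (C : 'M[R[i]]_2) (g : 'cV[R[i]]_2).

Lemma mulmx_up C (v : 'cV[R[i]]_2) :
  (C *m v) up 0 = C up up * v up 0 + C up dn * v dn 0.
Proof. rewrite mxE sum2. done. Qed.

Lemma mulmx_down C (v : 'cV[R[i]]_2) :
  (C *m v) dn 0 = C dn up * v up 0 + C dn dn * v dn 0.
Proof. rewrite mxE sum2. done. Qed.

Lemma psiS_up C g n j : psi_n C g n.+1 j up 0 =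
  C up up * psi_n C g n (j - 1) up 0 + C up dn * psi_n C g n (j - 1) dn 0.
Proof. by rewrite /psi_n iterS /walk_step mxE eqxx mulmx_up. Qed.

Lemma psiS_down C g n j : psi_n C g n.+1 j dn 0 =
  C dn up * psi_n C g n (j + 1) up 0 + C dn dn * psi_n C g n (j + 1) dn 0.
Proof. by rewrite /psi_n iterS /walk_step mxE /= mulmx_down. Qed.

Lemma psi0 C g j k : psi_n C g 0 j k 0 = if j == 0 then g k 0 else 0.
Proof. by rewrite /psi_n /= /init_state; case: ifP => // _; rewrite mxE. Qed.

Lemma unitary_facts C : qw_unitary C ->
  [/\ C up up * (cj (C up up)) + C up dn * (cj (C up dn)) = 1,
      C dn up * (cj (C dn up)) + C dn dn * (cj (C dn dn)) = 1 &
      C up up * (cj (C dn up)) + C up dn * (cj (C dn dn)) = 0].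
Proof.
move=> H.
have E i j : (C *m qw_adj C) i j = (1%:M : 'M[R[i]]_2) i j by rewrite H.
move: (E up up) (E dn dn) (E up dn).
rewrite !mxE !sum2 !mxE /=.
done.
Qed.

Lemma key C g (w p q lam : R[i]) : w != 0 ->
  C up up = w * C dn dn -> C up dn * q = w * C dn up * p ->
  p * g dn 0 = lam * g up 0 -> q * g up 0 = lam * g dn 0 ->
  forall n j, lam * psi_n C g n j up 0 = w ^ j * p * psi_n C g n (- j) dn 0 /\
              lam * psi_n C g n j dn 0 = w ^ j * q * psi_n C g n (- j) up 0.
Proof.
move=> w0 Ha Hb Hp Hq; elim=> [|n IH] j.
  rewrite !psi0 oppr_eq0; case: eqP => [->|_]; last by rewrite !mulr0.
  by rewrite expr0z !mul1r Hp Hq.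
split.
- rewrite psiS_up psiS_down.
  have [E1 E2] := IH (j - 1).
  rewrite opprB in E1 E2.
  have -> : - j + 1 = 1 - j by rewrite addrC.
  set U := psi_n C g n (j - 1) up 0 in E1 E2 *.
  set D := psi_n C g n (j - 1) dn 0 in E1 E2 *.
  set U' := psi_n C g n (1 - j) up 0 in E1 E2 *.
  set D' := psi_n C g n (1 - j) dn 0 in E1 E2 *.
  have -> : w ^ j = w ^ (j - 1) * w by rewrite -[X in _ * X]expr1z -expfzDr // subrK.
  transitivity (C up up * (lam * U) + C up dn * (lam * D)); first by ring.
  rewrite E1 E2 Ha.
  transitivity (w ^ (j - 1) * (w * C dn dn * p * D' + (C up dn * q) * U')); first by ring.
  rewrite Hb; ring.
- rewrite psiS_up psiS_down.
  have [E1 E2] := IH (j + 1).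
  rewrite opprD in E1 E2.
  set U := psi_n C g n (j + 1) up 0 in E1 E2 *.
  set D := psi_n C g n (j + 1) dn 0 in E1 E2 *.
  set U' := psi_n C g n (- j - 1) up 0 in E1 E2 *.
  set D' := psi_n C g n (- j - 1) dn 0 in E1 E2 *.
  transitivity (C dn up * (lam * U) + C dn dn * (lam * D)); first by ring.
  rewrite E1 E2 Ha.
  have -> : w ^ (j + 1) = w ^ j * w by rewrite expfzDr // expr1z.
  transitivity (w ^ j * (w * C dn up * p * D' + C dn dn * w * q * U')); first by ring.
  rewrite -Hb; ring.
Qed.

Lemma sym_of_key C g (w p q lam : R[i]) : w != 0 -> w * (cj w) = 1 ->
  p * (cj p) = q * (cj q) -> lam * (cj lam) = p * (cj p) -> lam != 0 ->
  C up up = w * C dn dn -> C up dn * q = w * C dn up * p ->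
  p * g dn 0 = lam * g up 0 -> q * g up 0 = lam * g dn 0 ->
  symmetric_in_distribution C g.
Proof.
move=> w0 Hww Hpq Hlam l0 Ha Hb Hp Hq j n.
have [E1 E2] := @key C g w p q lam w0 Ha Hb Hp Hq n j.
rewrite /prob !sqr_normc.
have ll0 : lam * (cj lam) != 0 by rewrite mulf_neq0 // conjc_eq0.
apply: (mulfI ll0).
transitivity ((lam * psi_n C g n j up 0) * (cj (lam * psi_n C g n j up 0)) +
   (lam * psi_n C g n j dn 0) * (cj (lam * psi_n C g n j dn 0))).
  rewrite !rmorphM; ring.
rewrite E1 E2 !rmorphM.
have Hw : w ^ j * (cj (w ^ j)) = 1.
  by rewrite rmorphXz ?unitfE // -expfzMl Hww exp1rz.
set U := psi_n C g n (- j) up 0.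
set D := psi_n C g n (- j) dn 0.
transitivity (w ^ j * (cj (w ^ j)) * (p * (cj p) * (D * (cj D)) + q * (cj q) * (U * (cj U)))).
  ring.
rewrite Hw Hlam Hpq; ring.
Qed.

Lemma phaseE (eta : R) : phase eta = (cos eta) +i* (sin eta).
Proof. by rewrite /phase; simpc. Qed.

Lemma phase_exists (z : R[i]) : z * (cj z) = 1 -> exists eta : R, z = phase eta.
Proof.
case: z => x y; simpc => /eqP; rewrite eq_complex /= => /andP[/eqP H1 _].
have Hx : -1 <= x <= 1.
  rewrite -ler_norml -(@ler_pXn2r _ 2) ?nnegrE // real_normK ?num_real // expr1n -H1.
  by rewrite -!expr2 lerDl sqr_ge0.
have H2 : x ^+ 2 + y ^+ 2 = 1 by rewrite !expr2.
have Hs : Num.sqrt (1 - x ^+ 2) = `|y| by rewrite -H2 addrC addKr sqrtr_sqr.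
have [y0|y0] := leP 0 y.
  exists (acos x); rewrite phaseE acosK ?in_itv //= sin_acos // Hs ger0_norm //.
exists (- acos x); by rewrite phaseE cosN sinN acosK ?in_itv //= sin_acos // Hs ltr0_norm // opprK.
Qed.
Lemma NconjE (x : R[i]) : Num.conj x = conjc x. Proof. by []. Qed.
Lemma cjM (x y : R[i]) : (cj (x * y)) = (cj x) * (cj y). Proof. exact: rmorphM. Qed.
Lemma cjD (x y : R[i]) : (cj (x + y)) = (cj x) + (cj y). Proof. exact: rmorphD. Qed.
Lemma cjB (x y : R[i]) : (cj (x - y)) = (cj x) - (cj y). Proof. exact: rmorphB. Qed.
Lemma cjN (x : R[i]) : (cj (- x)) = - (cj x). Proof. exact: rmorphN. Qed.
Lemma cjV (x : R[i]) : (cj (x^-1)) = ((cj x))^-1. Proof. exact: conjc_inv. Qed.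
Lemma cj0 : (cj (0 : R[i])) = 0. Proof. exact: conjc0. Qed.
Lemma cj1 : (cj (1 : R[i])) = 1. Proof. exact: conjc1. Qed.
Lemma cjX (x : R[i]) n : (cj (x ^+ n)) = ((cj x)) ^+ n. Proof. exact: rmorphXn. Qed.
Lemma cjK (x : R[i]) : (cj (cj x)) = x. Proof. exact: conjcK. Qed.

Definition s2 : R[i] := (Num.sqrt (2^-1 : R))%:C.

Lemma s2J : (cj s2) = s2.
Proof. exact: conjc_real. Qed.

Lemma s2sq : s2 * s2 = 2^-1.
Proof.
rewrite /s2 -rmorphM -expr2 sqr_sqrtr ?invr_ge0 ?ler0n //.
by rewrite fmorphV rmorph_nat.
Qed.

Lemma s2_neq0 : s2 != 0.
Proof. by apply/eqP => H; move: s2sq; rewrite H mulr0 => /eqP; rewrite eq_sym invr_eq0 pnatr_eq0. Qed.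

Lemma conj_i : (cj ('i%C : R[i])) = - 'i%C.
Proof. by simpc. Qed.

Lemma t_exists (z : R[i]) : z != 0 -> exists t, t * (cj t) = 1 /\ t ^+ 2 * (cj z) = - z.
Proof.
move=> z0.
pose n : R[i] := (Num.sqrt (complex.Re z ^+ 2 + complex.Im z ^+ 2))%:C.
have nJ : (cj n) = n by rewrite /n conjc_real.
have nn : n * n = z * (cj z).
  rewrite /n -rmorphM -expr2 sqr_sqrtr ?addr_ge0 ?sqr_ge0 //.
  case: (z) => x y; simpc; rewrite /= -!expr2 [y * x]mulrC addNr; done.
have zJ0 : (cj z) != 0 by rewrite conjc_eq0.
have n0 : n != 0.
  by apply/eqP => H; move: nn; rewrite H mulr0 => /eqP; rewrite eq_sym mulf_eq0 (negbTE z0) (negbTE zJ0).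
exists ('i%C * z / n); rewrite ?NconjE; split.
  rewrite !cjM cjV nJ conj_i.
  transitivity (- ('i%C * 'i%C) * (z * (cj z)) / (n * n)); first by field.
  by rewrite -nn -expr2 sqr_i opprK mul1r divff // mulf_neq0.
transitivity (('i%C ^+ 2) * z * (z * (cj z)) / (n * n)); first by field.
by rewrite -nn sqr_i mulfK ?mulf_neq0 // mulN1r.
Qed.

Definition vec (x y : R[i]) : 'cV[R[i]]_2 := \col_k (if k == up then x else y).
Lemma vec_up x y : vec x y up 0 = x. Proof. by rewrite mxE. Qed.
Lemma vec_dn x y : vec x y dn 0 = y. Proof. by rewrite mxE. Qed.

Lemma ord2P (k : 'I_2) : k = up \/ k = dn.
Proof.
case: k => [[|[|k]] Hk]; [left|right|by []]; by apply/val_inj.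
Qed.

Lemma cV2_eq (u v : 'cV[R[i]]_2) : u up 0 = v up 0 -> u dn 0 = v dn 0 -> u = v.
Proof.
move=> H1 H2; apply/matrixP => i j; rewrite (ord1 j).
by case: (ord2P i) => ->.
Qed.

Lemma unit_vec (t : R[i]) : t * (cj t) = 1 -> is_unit_vector (vec s2 (s2 * t)).
Proof.
move=> Ht; rewrite /is_unit_vector vec_up vec_dn !sqr_normc !cjM s2J.
transitivity ((s2 * s2) * (1 + t * (cj t))); first by ring.
by rewrite s2sq Ht -(natrD _ 1 1) mulVf // pnatr_eq0.
Qed.

Lemma nz_of_unit (x : R[i]) : x * cj x = 1 -> x != 0.
Proof. by move=> H; apply/eqP => x0; move: H; rewrite x0 mul0r => /eqP; rewrite eq_sym oner_eq0. Qed.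

Lemma cases_trivial C : qw_unitary C -> trivial_coin C ->
  (C up dn = 0 /\ C dn up = 0 /\ C up up * cj (C up up) = 1 /\ C dn dn * cj (C dn dn) = 1) \/
  (C up up = 0 /\ C dn dn = 0 /\ C up dn * cj (C up dn) = 1 /\ C dn up * cj (C dn up) = 1).
Proof.
move=> HC; have [F1 F2 F3] := unitary_facts HC.
rewrite /trivial_coin.
move: F1 F2 F3.
set a := C up up; set b := C up dn; set c := C dn up; set d := C dn dn.
move=> F1 F2 F3 /eqP; rewrite !mulf_eq0 => /orP[/orP[/orP[|]|]|] /eqP H.
- right; move: F1 F3; rewrite H mul0r add0r => F1; rewrite mul0r add0r => /eqP.
  rewrite mulf_eq0 (negbTE (nz_of_unit F1)) /= conjc_eq0 => /eqP Hd.
  by move: F2; rewrite Hd mul0r addr0.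
- left; move: F1 F3; rewrite H mul0r addr0 => F1; rewrite mul0r addr0 => /eqP.
  rewrite mulf_eq0 (negbTE (nz_of_unit F1)) /= conjc_eq0 => /eqP Hc.
  by move: F2; rewrite Hc mul0r add0r.
- left; move: F2 F3; rewrite H mul0r add0r => F2; rewrite cj0 mulr0 add0r => /eqP.
  rewrite mulf_eq0 conjc_eq0 (negbTE (nz_of_unit F2)) orbF => /eqP Hb.
  by move: F1; rewrite Hb mul0r addr0.
- right; move: F2 F3; rewrite H mul0r addr0 => F2; rewrite cj0 mulr0 addr0 => /eqP.
  rewrite mulf_eq0 conjc_eq0 (negbTE (nz_of_unit F2)) orbF => /eqP Ha.
  by move: F1; rewrite Ha mul0r add0r.
Qed.

Lemma triv_sym C (w0 : R[i]) : qw_unitary C -> trivial_coin C -> w0 * cj w0 = 1 ->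
  symmetric_in_distribution C (vec s2 (s2 * w0)).
Proof.
move=> HC HT Hw.
have w00 := nz_of_unit Hw.
have cw00 : cj w0 != 0 by rewrite conjc_eq0.
have Hp : cj w0 * vec s2 (s2 * w0) dn 0 = 1 * vec s2 (s2 * w0) up 0.
  rewrite vec_up vec_dn; transitivity (s2 * (w0 * cj w0)); first by ring.
  by rewrite Hw mulr1 mul1r.
have Hq : w0 * vec s2 (s2 * w0) up 0 = 1 * vec s2 (s2 * w0) dn 0.
  by rewrite vec_up vec_dn; ring.
have Hpq : cj w0 * cj (cj w0) = w0 * cj w0 by rewrite cjK mulrC.
have Hl : 1 * cj 1 = cj w0 * cj (cj w0) by rewrite cj1 mul1r cjK mulrC Hw.
case: (cases_trivial HC HT) => [[Hb [Hc [Fa Fd]]]|[Ha [Hd [Fb Fc]]]].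
- have d0 := nz_of_unit Fd; have a0 := nz_of_unit Fa.
  have cd0 : cj (C dn dn) != 0 by rewrite conjc_eq0.
  refine (@sym_of_key C _ (C up up / C dn dn) (cj w0) w0 1 _ _ Hpq Hl (oner_neq0 _) _ _ Hp Hq).
  + by rewrite mulf_neq0 // invr_eq0.
  + rewrite cjM cjV.
    transitivity ((C up up * cj (C up up)) / (C dn dn * cj (C dn dn))); first by fld.
    by rewrite Fa Fd divr1.
  + by rewrite divfK.
  + by rewrite Hb Hc mulr0 !mul0r.
- have c0 := nz_of_unit Fc; have b0 := nz_of_unit Fb.
  have cc0 : cj (C dn up) != 0 by rewrite conjc_eq0.
  refine (@sym_of_key C _ (C up dn * w0 / (C dn up * cj w0)) (cj w0) w0 1 _ _ Hpq Hl (oner_neq0 _) _ _ Hp Hq).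
  + by rewrite !mulf_neq0 // invr_eq0 mulf_neq0.
  + rewrite !cjM cjV !cjM cjK.
    transitivity ((C up dn * cj (C up dn)) * (w0 * cj w0) / ((C dn up * cj (C dn up)) * (w0 * cj w0))); first by fld.
    by rewrite Fb Fc Hw !mul1r invr1.
  + by rewrite Ha Hd mulr0.
  + by fld.
Qed.

Definition wr (r : R) : R[i] := r +i* Num.sqrt (1 - r ^+ 2).

Lemma wr_unit r : 0 <= r <= 1 -> wr r * cj (wr r) = 1.
Proof.
move=> /andP[r0 r1].
have h : 0 <= 1 - r ^+ 2 by rewrite subr_ge0 exprn_ile1.
rewrite /wr; simpc.
by rewrite -!expr2 sqr_sqrtr // addrC subrK [_ * r]mulrC addNr.
Qed.

Lemma triv_part C : qw_unitary C -> trivial_coin C ->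
     exists S : set 'cV[R[i]]_2,
       [/\ ~ countable S,
           (forall g, S g -> is_unit_vector g /\ symmetric_in_distribution C g) &
           (forall g g', S g -> S g' -> g <> g' -> ~ phase_equiv g g')].
Proof.
move=> HC HT.
pose v r := vec s2 (s2 * wr r).
exists [set g | exists r : R, 0 <= r <= 1 /\ g = v r]%classic; split.
- move/countable_injP => [f finj].
  apply: (@unc01 R); apply/countable_injP; exists (fun r => f (v r)).
  move=> r r'; rewrite !inE /= => Hr Hr' /finj E.
  have {E} E : v r = v r'.
    by apply: E; rewrite inE; [exists r | exists r'].
  have := congr1 (fun m : 'cV[R[i]]_2 => m dn 0) E.
  rewrite /v !vec_dn => /(mulfI s2_neq0) /(congr1 (@complex.Re _)).
  by [].
- move=> g [r [Hr ->]]; split; first exact: unit_vec (wr_unit Hr).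
  exact: triv_sym HC HT (wr_unit Hr).
- move=> g g' [r [Hr ->]] [r' [Hr' ->]] Hne [eta Heta].
  apply: Hne; rewrite Heta.
  have := congr1 (fun m : 'cV[R[i]]_2 => m up 0) Heta.
  rewrite /v !vec_up mxE vec_up => /eqP.
  rewrite -{1}[s2]mul1r (inj_eq (mulIf s2_neq0)) eq_sym => /eqP ->.
  by rewrite scale1r.
Qed.

Lemma nontriv_setup C : qw_unitary C -> ~ trivial_coin C ->
  exists a b e : R[i],
   [/\ C up up = a, C up dn = b, C dn up = - (e * cj b) & C dn dn = e * cj a] /\
   [/\ a != 0, b != 0, a * cj a + b * cj b = 1 & e * cj e = 1].
Proof.
move=> HC HT; have [F1 F2 F3] := unitary_facts HC.
have : C up up * C up dn * C dn up * C dn dn != 0 by apply/eqP.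
rewrite !mulf_eq0 !negb_or => /andP[/andP[/andP[a0 b0] c0] d0].
move: F1 F2 F3 a0 b0 c0 d0.
set a := C up up; set b := C up dn; set c := C dn up; set d := C dn dn.
move=> F1 F2 F3 a0 b0 c0 d0.
have ca0 : cj a != 0 by rewrite conjc_eq0.
pose e := d / cj a.
have Ed : d = e * cj a by rewrite /e divfK.
have Hc' : cj c = - (b * cj e).
  apply: (mulfI a0).
  move/eqP: F3; rewrite addr_eq0 => /eqP ->.
  rewrite Ed !(cjM, cjK); ring.
have Ec : c = - (e * cj b).
  by rewrite -[c]cjK Hc' !(cjN, cjM, cjK) mulrC.
have Ee : e * cj e = 1.
  transitivity (e * cj e * (a * cj a + b * cj b)); first by rewrite F1 mulr1.
  rewrite -F2 Ec Ed !(cjN, cjM, cjK); ring.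
exists a, b, e; split; split => //.
Qed.

Lemma nontriv_sym C (a b e t : R[i]) :
  C up up = a -> C up dn = b -> C dn up = - (e * cj b) -> C dn dn = e * cj a ->
  a != 0 -> b != 0 -> e * cj e = 1 ->
  t * cj t = 1 -> t ^+ 2 * (cj a * b) = - (a * cj b) ->
  symmetric_in_distribution C (vec s2 (s2 * t)).
Proof.
move=> Ea Eb Ec Ed a0 b0 He Ht Ht2.
have e0 := nz_of_unit He.
have t0 := nz_of_unit Ht.
have ca0 : cj a != 0 by rewrite conjc_eq0.
have ce0 : cj e != 0 by rewrite conjc_eq0.
have p0 : b * (e * cj a) != 0 by rewrite !mulf_neq0.
pose w := a / (e * cj a).
pose p := b * (e * cj a).
pose q := a * - (e * cj b).
pose lam := p * t.
have H1 : w != 0 by rewrite !mulf_neq0 // invr_eq0 mulf_neq0.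
have H2 : w * cj w = 1.
  rewrite /w !(cjM, cjV, cjK).
  transitivity (1 / (e * cj e)); first by fld.
  by rewrite He divr1.
have H3 : p * cj p = q * cj q by rewrite /p /q !(cjM, cjN, cjK); ring.
have H4 : lam * cj lam = p * cj p.
  transitivity (p * cj p * (t * cj t)); first by rewrite /lam !cjM; ring.
  by rewrite Ht mulr1.
have H5 : lam != 0 by rewrite mulf_neq0.
have H6 : C up up = w * C dn dn by rewrite Ea Ed /w; fld.
have H7 : C up dn * q = w * C dn up * p by rewrite Eb Ec /w /p /q; fld.
have H8 : p * vec s2 (s2 * t) dn 0 = lam * vec s2 (s2 * t) up 0.
  by rewrite vec_up vec_dn /lam; ring.
have H9 : q * vec s2 (s2 * t) up 0 = lam * vec s2 (s2 * t) dn 0.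
  rewrite vec_up vec_dn /lam /p /q; symmetry.
  transitivity (e * s2 * (t ^+ 2 * (cj a * b))); first by ring.
  rewrite Ht2; ring.
exact: (@sym_of_key C _ w p q lam H1 H2 H3 H4 H5 H6 H7 H8 H9).
Qed.

End W.
Fact P_key : unit. Proof. exact: tt. Qed.
Definition P (R : realType) (C : 'M[R[i]]_2) (g : 'cV[R[i]]_2) (n : nat) (j : int) (k : 'I_2) : R[i] := locked_with P_key (psi_n C g n j k 0).
Lemma PE (R : realType) (C : 'M[R[i]]_2) g n j k : P C g n j k = psi_n C g n j k 0.
Proof. by rewrite /P unlock. Qed.
Lemma probP (R : realType) (C : 'M[R[i]]_2) g j n : prob C g j n = `|P C g n j up| ^+ 2 + `|P C g n j dn| ^+ 2.
Proof. by rewrite /prob !PE. Qed.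
Lemma PS_up (R : realType) (C : 'M[R[i]]_2) g n j : P C g n.+1 j up =
  C up up * P C g n (j - 1) up + C up dn * P C g n (j - 1) dn.
Proof. by rewrite !PE psiS_up. Qed.
Lemma PS_dn (R : realType) (C : 'M[R[i]]_2) g n j : P C g n.+1 j dn =
  C dn up * P C g n (j + 1) up + C dn dn * P C g n (j + 1) dn.
Proof. by rewrite !PE psiS_down. Qed.
Lemma P0 (R : realType) (C : 'M[R[i]]_2) g j k : P C g 0 j k = if j == 0 then g k 0 else 0.
Proof. by rewrite PE psi0. Qed.



Lemma nontriv_conv (R : realType) (C : 'M[R[i]]_2) (a b e t : R[i]) g :
  C up up = a -> C up dn = b -> C dn up = - (e * cj b) -> C dn dn = e * cj a ->
  a != 0 -> b != 0 -> a * cj a + b * cj b = 1 -> e * cj e = 1 ->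
  t ^+ 2 * (cj a * b) = - (a * cj b) ->
  is_unit_vector g -> symmetric_in_distribution C g ->
  phase_equiv (vec (s2 R) (s2 R * t)) g \/ phase_equiv (vec (s2 R) (s2 R * - t)) g.
Proof.
move=> Ea Eb Ec Ed a0 b0 F1 He Ht2 Hu Hs.
have e0 := nz_of_unit He.
have Ece : cj e = e^-1 by apply: (mulfI e0); rewrite He mulfV.
have A := Hs 1 1%N.
have B := Hs 1 3%N.
rewrite !probP !(PS_up, PS_dn) !P0 /= !(mulr0, addr0, add0r) in A B.
rewrite !sqr_normc Ea Eb Ec Ed !(cjM, cjD, cjN, cjK, cj0) Ece in A B.
move: Hu; rewrite /is_unit_vector !sqr_normc => Hxy.
move: A B Hxy; set x := g up 0; set y := g dn 0 => A B Hxy.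
move/eqP: A; rewrite -subr_eq0 => /eqP A.
move/eqP: B; rewrite -subr_eq0 => /eqP B.
have A' : (a * cj a - b * cj b) * (x * cj x - y * cj y) +
   2 * (a * cj b * x * cj y + cj a * b * cj x * y) = 0.
  by rewrite -A; fld.
have B' : b * cj b * ((4 * (a * cj b * (cj a * b)) - (a * cj a - b * cj b) ^+ 2) * (x * cj x - y * cj y) - 4 * (a * cj a - b * cj b) * (a * cj b * x * cj y + cj a * b * cj x * y)) = 0.
  have : b * cj b * ((4 * (a * cj b * (cj a * b)) - (a * cj a - b * cj b) ^+ 2) * (x * cj x - y * cj y) - 4 * (a * cj a - b * cj b) * (a * cj b * x * cj y + cj a * b * cj x * y)) +
     a * cj a * (b * cj b) * ((a * cj a - b * cj b) * (x * cj x - y * cj y) + 2 * (a * cj b * x * cj y + cj a * b * cj x * y)) = 0 by rewrite -B; fld.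
  by rewrite A' mulr0 addr0.
have bb0 : b * cj b != 0 by rewrite mulf_neq0 // conjc_eq0.
have B'' : (4 * (a * cj b * (cj a * b)) - (a * cj a - b * cj b) ^+ 2) * (x * cj x - y * cj y) - 4 * (a * cj a - b * cj b) * (a * cj b * x * cj y + cj a * b * cj x * y) = 0.
  by move/eqP: B'; rewrite mulf_eq0 (negbTE bb0) /= => /eqP.
have Hm : (x * cj x - y * cj y) = 0.
  transitivity ((a * cj a + b * cj b) ^+ 2 * (x * cj x - y * cj y)); first by rewrite F1 expr1n mul1r.
  transitivity ((4 * (a * cj b * (cj a * b)) - (a * cj a - b * cj b) ^+ 2) * (x * cj x - y * cj y) - 4 * (a * cj a - b * cj b) * (a * cj b * x * cj y + cj a * b * cj x * y) + 2 * (a * cj a - b * cj b) * ((a * cj a - b * cj b) * (x * cj x - y * cj y) + 2 * (a * cj b * x * cj y + cj a * b * cj x * y))).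
    by ring.
  by rewrite B'' A' mulr0 addr0.
have HS : (a * cj b * x * cj y + cj a * b * cj x * y) = 0.
  move: A'; rewrite Hm mulr0 add0r => /eqP; rewrite mulf_eq0 pnatr_eq0 /= => /eqP //.
have Hx : x * cj x = 2^-1.
  have : (x * cj x) *+ 2 = 1.
    have Hm' : x * cj x = y * cj y by apply/eqP; rewrite -subr_eq0 Hm.
    by rewrite -Hxy -Hm' mulr2n.
  have two0 : (2 : R[i]) != 0 by rewrite pnatr_eq0.
  by move=> H; apply: (mulIf two0); rewrite mulVf // mulr_natr H.
have x0 : x != 0.
  by apply/eqP => x0; move: Hx; rewrite x0 mul0r => /eqP; rewrite eq_sym invr_eq0 pnatr_eq0.
have Hprod : cj a * b * cj x * cj x * ((y - t * x) * (y + t * x)) = 0.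
  transitivity (cj x * y * (a * cj b * x * cj y + cj a * b * cj x * y) + a * cj b * x * cj x * (x * cj x - y * cj y) -
     (t ^+ 2 * (cj a * b) + a * cj b) * x ^+ 2 * cj x ^+ 2); first by ring.
  by rewrite HS Hm Ht2 addNr; ring.
have Hk : x / s2 R * cj (x / s2 R) = 1.
  rewrite cjM cjV s2J.
  transitivity (x * cj x / (s2 R * s2 R)); first by fld; rewrite s2_neq0.
  by rewrite Hx s2sq divff // invr_eq0 pnatr_eq0.
have [eta Heta] := phase_exists Hk.
move/eqP: Hprod; rewrite !mulf_eq0 !conjc_eq0 (negbTE a0) (negbTE b0) (negbTE x0) /=.
case/orP => /eqP H.
- left; exists eta; apply: cV2_eq; rewrite mxE ?vec_up ?vec_dn -Heta.
    by rewrite divfK // s2_neq0.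
  move/eqP: H; rewrite subr_eq0 => /eqP Hy; transitivity y; first by []. by rewrite Hy; fld; rewrite s2_neq0.
- right; exists eta; apply: cV2_eq; rewrite mxE ?vec_up ?vec_dn -Heta.
    by rewrite divfK // s2_neq0.
  move/eqP: H; rewrite addr_eq0 => /eqP Hy; transitivity y; first by []. by rewrite Hy; fld; rewrite s2_neq0.
Qed.

Theorem theorem1 (R : realType) (C : 'M[R[i]]_2) (HC : qw_unitary C) :
  (~ trivial_coin C ->
     exists g1 g2 : 'cV[R[i]]_2,
       [/\ is_unit_vector g1 /\ is_unit_vector g2,
           symmetric_in_distribution C g1, symmetric_in_distribution C g2,
           ~ phase_equiv g1 g2 &
           forall g : 'cV[R[i]]_2, is_unit_vector g ->
             symmetric_in_distribution C g -> phase_equiv g1 g \/ phase_equiv g2 g])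
  /\
  (trivial_coin C ->
     exists S : set 'cV[R[i]]_2,
       [/\ ~ countable S,
           (forall g, S g -> is_unit_vector g /\ symmetric_in_distribution C g) &
           (forall g g', S g -> S g' -> g <> g' -> ~ phase_equiv g g')]).
Proof.
split; last by move=> HT; exact: triv_part HC HT.
move=> HT.
have [a [b [e [[Ea Eb Ec Ed] [a0 b0 F1 He]]]]] := nontriv_setup HC HT.
have z0 : a * cj b != 0 by rewrite mulf_neq0 // conjc_eq0.
have [t [Ht Ht2]] := t_exists z0.
rewrite cjM cjK in Ht2.
have Ht' : (- t) * cj (- t) = 1 by rewrite cjN mulrNN.
have Ht2' : (- t) ^+ 2 * (cj a * b) = - (a * cj b) by rewrite sqrrN.
have t0 := nz_of_unit Ht.
exists (vec (s2 R) (s2 R * t)), (vec (s2 R) (s2 R * - t)); split.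
- by split; apply: unit_vec.
- exact: nontriv_sym Ea Eb Ec Ed a0 b0 He Ht Ht2.
- exact: nontriv_sym Ea Eb Ec Ed a0 b0 He Ht' Ht2'.
- move=> [eta H].
  have H1 := congr1 (fun m : 'cV[R[i]]_2 => m up 0) H.
  have H2 := congr1 (fun m : 'cV[R[i]]_2 => m dn 0) H.
  move: H1 H2; rewrite /= !vec_up !vec_dn mxE vec_up => /eqP H1; rewrite mxE vec_dn.
  move: H1; rewrite -{1}[s2 R]mul1r (inj_eq (mulIf (s2_neq0 R))) eq_sym => /eqP ->.
  rewrite mul1r => /eqP; rewrite -subr_eq0 -mulrBr mulf_eq0 (negbTE (s2_neq0 R)) /=.
  rewrite -opprD oppr_eq0 -mulr2n mulrn_eq0 /= => /eqP t0'.
  by move: t0; rewrite t0' eqxx.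
- move=> g Hu Hs.
  exact: nontriv_conv Ea Eb Ec Ed a0 b0 F1 He Ht2 Hu Hs.
Qed.
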